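(* For every $N$ there is $t>1$ with the following property. Let $\theta\in\Theta_N$ and consider the renormalization triangulation associated with any sector renormalization of $\mathbb{L}_\theta$. Then any two sectors (triangles) of this triangulation have comparable angles at $0$: the ratio of their angles lies in $[1/t,t]$.
   Context: For $\theta\in\mathbb{R}/\mathbb{Z}$ let $\mathbb{L}_\theta:\overline{\mathbb{D}}\to\overline{\mathbb{D}}$, $z\mapsto e^{2\pi i\theta}z$. $\Theta_N$ is the set of $\theta$ such that $\theta=[0;a_1,a_2,\dots]$ with all $|a_i|\le N$, or $\theta=1-[0;a_1,a_2,\dots]$ with all $|a_i|\le N$. A sector renormalization of $\mathbb{L}_\theta$ consists of a closed sector $\mathbb{X}=\mathbb{X}_-\cup\mathbb{X}_+\subset\overline{\mathbb{D}}$ with vertex $0$, split into two closed subsectors with common boundary ray through $1$ (one of them may degenerate to a ray, not both), and iterates $\mathbb{L}_\theta^{\mathbf a}|_{\mathbb{X}_-}$, $\mathbb{L}_\theta^{\mathbf b}|_{\mathbb{X}_+}$ realizing the first return of points of $\mathbb{X}_-\cup\mathbb{X}_+$ to $\mathbb{X}$; the gluing map $z\mapsto z^{1/\omega}$ ($\omega$ the angle of $\mathbb{X}$) projects this pair to a new rotation. The associated renormalization triangulation of $\overline{\mathbb{D}}$ is the collection of sectors $\mathbb{L}_\theta^{i}(\mathbb{X}_-)$, $0\le i\le\mathbf a-1$, and $\mathbb{L}_\theta^{i}(\mathbb{X}_+)$, $0\le i\le\mathbf b-1$. *)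

(* Defs.v *)
From Stdlib Require Import Reals List.
Open Scope R_scope.

Fixpoint cf_fin (l : list nat) : R :=
  match l with
  | nil => 0
  | a :: l' => / (INR a + cf_fin l')
  end.

(* n-th convergent [0; a_1, ..., a_n] of the sequence a (a 0 is unused). *)
Definition cf_approx (a : nat -> nat) (n : nat) : R :=
  cf_fin (map a (seq 1 n)).

Definition cf_value (a : nat -> nat) (x : R) : Prop :=
  Un_cv (cf_approx a) x.

(* theta (a real representative of an element of R/Z) lies in Theta_N:
   theta = [0;a_1,a_2,...] or theta = 1 - [0;a_1,a_2,...] modulo Z,
   with all partial quotients 1 <= a_i <= N. *)
Definition in_Theta (N : nat) (theta : R) : Prop :=
  exists (a : nat -> nat) (x : R),
    (forall i, (1 <= i)%nat -> (1 <= a i <= N)%nat) /\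
    cf_value a x /\
    exists k : Z, theta = x + IZR k \/ theta = 1 - x + IZR k.

(* ---------- Sectors of the closed unit disk, in angular coordinates ----------
   Angles are measured in turns (full turn = 1), modulo Z.  A closed sector
   with vertex 0 is {r e^{2 pi i phi} : 0 <= r <= 1, phi in [s, s + w] mod 1},
   encoded by the pair (s, w) (start angle, angular width, 0 <= w < 1);
   w = 0 is a ray.  L_theta acts on angles by phi |-> phi + theta. *)

Definition sector := (R * R)%type.
Definition sec_start (S : sector) : R := fst S.
Definition sec_angle (S : sector) : R := snd S.

Definition fracR (x : R) : R := x - IZR (Int_part x).

Definition in_sector (S : sector) (phi : R) : Prop :=
  fracR (phi - sec_start S) <= sec_angle S.

Definition in_sector_int (S : sector) (phi : R) : Prop :=
  0 < fracR (phi - sec_start S) < sec_angle S.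

Definition rot_sector (theta : R) (n : nat) (S : sector) : sector :=
  (sec_start S + INR n * theta, sec_angle S).

(* The sector X = X_- u X_+ ; X_- = [-alpha, 0], X_+ = [0, beta]
   (the common boundary ray is the ray through 1, i.e. angle 0). *)
Definition Xsec (alpha beta : R) : sector := (- alpha, alpha + beta).
Definition Xminus (alpha : R) : sector := (- alpha, alpha).
Definition Xplus (beta : R) : sector := (0, beta).

(* L_theta^n restricted to Y realizes the first return of the points of Y
   to X: every point of Y lands in X after n iterates, and no earlier iterate
   0 < i < n meets the interior of X (for non-degenerate Y this is exactly the
   first return of the interior points of Y, boundary rays being shared). *)
Definition first_return (theta : R) (X Y : sector) (n : nat) : Prop :=
  (1 <= n)%nat /\
  forall phi, in_sector Y phi ->
    in_sector X (phi + INR n * theta) /\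
    forall i : nat, (0 < i < n)%nat -> ~ in_sector_int X (phi + INR i * theta).

Definition sector_renormalization (theta alpha beta : R) (a b : nat) : Prop :=
  0 <= alpha /\ 0 <= beta /\ 0 < alpha + beta < 1 /\
  first_return theta (Xsec alpha beta) (Xminus alpha) a /\
  first_return theta (Xsec alpha beta) (Xplus beta) b.

Definition renorm_triangulation (theta alpha beta : R) (a b : nat) : list sector :=
  map (fun i => rot_sector theta i (Xminus alpha)) (seq 0 a) ++
  map (fun i => rot_sector theta i (Xplus beta)) (seq 0 b).

(* Main.v *)
Require Import Defs.
From Stdlib Require Import ZArith.
From Stdlib Require Import Reals List Lia Lra.
Open Scope R_scope.

Lemma step (Nr c x p q D E : R) :
  1 <= Nr -> 0 < c -> 8 * (Nr+1)^2 * c = 1 ->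
  / (Nr+1) <= x -> x * (Nr+2) <= Nr + 1 ->
  1 <= p -> 1 <= q -> 0 <= D -> 0 <= E -> D = x * E ->
  q * x >= p - D -> p * E >= c * (1 + / p) -> q * D < 2 * c ->
  q * D >= c * (1 + / q).
Proof.
  intros HN Hc Hc1 Hx1 Hx2 Hp Hq HD HE HDE Hqx HpE HqD.
  assert (Hx0 : 0 < x). { apply Rlt_le_trans with (/(Nr+1)); auto. apply Rinv_0_lt_compat; lra. }
  assert (HDlt : D < 2 * c / q).
  { apply (Rmult_lt_reg_l q); [lra|]. replace (q * (2*c/q)) with (2*c) by (field; lra). lra. }
  assert (HDM : D < 2 * c).
  { apply Rlt_le_trans with (2*c/q); auto. unfold Rdiv. rewrite <- (Rmult_1_r (2*c)) at 2.
    apply Rmult_le_compat_l; [lra|]. rewrite <- Rinv_1. apply Rinv_le_contravar; lra. }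
  assert (HM : 2 * c * (Nr + 2) <= 1/2).
  { assert (8*(Nr+1)^2 >= 4 * (Nr+2)) by nra. nra. }
  assert (H3 : q * (Nr+1) >= (p - D) * (Nr+2)).
  { assert (q * x * (Nr+2) <= q * (Nr+1)) by nra. nra. }
  assert (H4 : (q - p) * (Nr+1) >= p/2) by nra.
  assert (H5 : E <= (Nr+1) * D).
  { assert (x * (Nr+1) >= 1).
    { apply Rmult_le_compat_r with (r := Nr+1) in Hx1; [|lra]. rewrite Rinv_l in Hx1; lra. }
    nra. }
  assert (H6 : q * D >= c + c / p - (Nr+1) * D^2).
  { assert (q*D = q*x*E) by (rewrite HDE; ring).
    assert (q*x*E >= (p - D)*E) by nra.
    assert (D*E <= (Nr+1)*D^2) by nra.
    unfold Rdiv. nra. }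
  assert (H7 : (Nr+1) * D^2 <= (Nr+1) * (2*c/q)^2).
  { apply Rmult_le_compat_l; [lra|]. apply pow_incr; lra. }
  assert (H8 : c / p - c / q >= c / (2*(Nr+1)*q)).
  { unfold Rdiv. 
    assert (c*/p - c*/q = c*(q-p)*/(p*q)) by (field; lra).
    rewrite H. 
    assert (c*(q-p)*/(p*q) - c*/(2*(Nr+1)*q) = c*(2*(Nr+1)*(q-p) - p) * /(2*(Nr+1)*p*q)) by (field; lra).
    assert (0 <= c*(2*(Nr+1)*(q-p) - p) * /(2*(Nr+1)*p*q)).
    { apply Rmult_le_pos; [nra|]. apply Rlt_le, Rinv_0_lt_compat. nra. }
    lra. }
  assert (H9 : c / (2*(Nr+1)*q) >= (Nr+1)*(2*c/q)^2).
  { assert (c / (2*(Nr+1)*q) - (Nr+1)*(2*c/q)^2 = c * (q - 8*(Nr+1)^2*c) / (2*(Nr+1)*q^2)) by (field; lra).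
    rewrite Hc1 in H.
    assert (0 <= c * (q - 1) / (2*(Nr+1)*q^2)).
    { unfold Rdiv. apply Rmult_le_pos; [nra|]. apply Rlt_le, Rinv_0_lt_compat. nra. }
    lra. }
  unfold Rdiv in *. lra.
Qed.
Definition K (N : nat) (x : R) : Prop :=
  exists a : nat -> nat, (forall i, (1 <= i)%nat -> (1 <= a i <= N)%nat) /\ cf_value a x.

Lemma cf_fin_bounds (N : nat) (l : list nat) :
  (forall z, In z l -> (1 <= z <= N)%nat) ->
  0 <= cf_fin l <= 1 /\ (l <> nil -> / (INR N + 1) <= cf_fin l).
Proof.
  induction l as [|z l IH]; intros H; simpl.
  - split; [lra| congruence].
  - destruct IH as [[H1 H2] _]. { intros w Hw; apply H; right; auto. }
    assert (Hz : (1 <= z <= N)%nat) by (apply H; left; auto).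
    assert (1 <= INR z) by (apply (le_INR 1); lia).
    assert (INR z <= INR N) by (apply le_INR; lia).
    split; [split|].
    + apply Rlt_le, Rinv_0_lt_compat; lra.
    + rewrite <- Rinv_1. apply Rinv_le_contravar; lra.
    + intros _. apply Rinv_le_contravar; lra.
Qed.

Lemma cf_approx_S_bounds N a n :
  (forall i, (1 <= i)%nat -> (1 <= a i <= N)%nat) ->
  / (INR N + 1) <= cf_approx a (S n) <= 1.
Proof.
  intros Ha. unfold cf_approx.
  destruct (cf_fin_bounds N (map a (seq 1 (S n)))) as [[H1 H2] H3].
  { intros z Hz. apply in_map_iff in Hz. destruct Hz as [i [<- Hi]].
    apply in_seq in Hi. apply Ha. lia. }
  split; auto. apply H3. simpl. congruence.
Qed.

Lemma cv_shift (u : nat -> R) l : Un_cv u l -> Un_cv (fun n => u (S n)) l.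
Proof.
  intros H eps Heps. destruct (H eps Heps) as [M HM]. exists M.
  intros n Hn. apply HM. lia.
Qed.

Lemma K_weak N x : K N x -> / (INR N + 1) <= x <= 1.
Proof.
  intros [a [Ha Hcv]]. apply cv_shift in Hcv.
  split.
  - apply (Rle_cv_lim (Un := fun _ => / (INR N + 1)) (Vn := fun n => cf_approx a (S n))); auto.
    + intros n. apply (cf_approx_S_bounds N); auto.
    + intros e He. exists 0%nat. intros. unfold Rdist, Rminus. rewrite Rplus_opp_r, Rabs_R0. auto.
  - apply (Rle_cv_lim (Vn := fun _ => 1) (Un := fun n => cf_approx a (S n))); auto.
    + intros n. apply (cf_approx_S_bounds N); auto.
    + intros e He. exists 0%nat. intros. unfold Rdist, Rminus. rewrite Rplus_opp_r, Rabs_R0. auto.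
Qed.

Lemma cf_approx_S a n :
  cf_approx a (S n) = / (INR (a 1%nat) + cf_approx (fun i => a (S i)) n).
Proof.
  unfold cf_approx. simpl. f_equal. f_equal. f_equal.
  rewrite <- seq_shift, map_map. reflexivity.
Qed.

Lemma K_decomp N x : K N x ->
  exists (A : nat) (y : R), (1 <= A <= N)%nat /\ K N y /\ x = / (INR A + y).
Proof.
  intros HK. pose proof (K_weak N x HK) as [Hx1 Hx2].
  destruct HK as [a [Ha Hcv]].
  assert (HN : 0 < / (INR N + 1)) by (apply Rinv_0_lt_compat; pose proof (pos_INR N); lra).
  exists (a 1%nat), (/ x - INR (a 1%nat)). split; [apply Ha; lia|]. split.
  - exists (fun i => a (S i)). split. { intros i Hi. apply Ha. lia. }
    unfold cf_value.
    apply cv_shift in Hcv.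
    assert (Hc : continuity_pt (fun z => / z - INR (a 1%nat)) x).
    { apply continuity_pt_minus.
      - change (fun z => / z) with (/ id)%F. apply continuity_pt_inv.
        + apply derivable_continuous_pt, derivable_pt_id.
        + unfold id; lra.
      - apply continuity_pt_const. intros u v; auto. }
    pose proof (continuity_seq _ _ _ Hc Hcv) as H.
    intros e He. destruct (H e He) as [M HM]. exists M. intros n Hn.
    specialize (HM n Hn). simpl in HM.
    rewrite cf_approx_S in HM. rewrite Rinv_inv in HM.
    replace (INR (a 1%nat) + cf_approx (fun i : nat => a (S i)) n - INR (a 1%nat))
      with (cf_approx (fun i : nat => a (S i)) n) in HM by ring. exact HM.
  - replace (INR (a 1%nat) + (/ x - INR (a 1%nat))) with (/ x) by ring.
    rewrite Rinv_inv. reflexivity.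
Qed.

Lemma K_bounds N x : K N x ->
  (1 <= N)%nat /\ / (INR N + 1) <= x /\ x * (INR N + 2) <= INR N + 1.
Proof.
  intros HK. destruct (K_decomp N x HK) as [A [y [HA [Hy Hxy]]]].
  pose proof (K_weak N x HK). pose proof (K_weak N y Hy).
  split; [lia|]. split; [tauto|].
  assert (1 <= INR A) by (apply (le_INR 1); lia).
  assert (0 < / (INR N + 1)) by (apply Rinv_0_lt_compat; pose proof (pos_INR N); lra).
  assert (Hy1 : (INR N + 2) / (INR N + 1) <= INR A + y).
  { replace ((INR N + 2) / (INR N + 1)) with (1 + /(INR N + 1)) by (field; pose proof (pos_INR N); lra). lra. }
  rewrite Hxy.
  assert (0 < INR A + y) by lra.
  apply (Rmult_le_reg_l (INR A + y)); auto.
  rewrite <- Rmult_assoc, Rinv_r by lra.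
  unfold Rdiv in Hy1.
  apply Rmult_le_compat_r with (r := INR N + 1) in Hy1; [|pose proof (pos_INR N); lra].
  rewrite Rmult_assoc, Rinv_l in Hy1 by (pose proof (pos_INR N); lra). lra.
Qed.

Definition Z_le_gt_dec_ (a b : Z) : {(a <= b)%Z} + {(a > b)%Z}.
Proof. destruct (Z_le_gt_dec a b); auto. Defined.

Definition cN (N : nat) : R := / (8 * (INR N + 1)^2).

Lemma cN_spec N : 0 < cN N /\ 8 * (INR N + 1)^2 * cN N = 1.
Proof.
  unfold cN. pose proof (pos_INR N). split.
  - apply Rinv_0_lt_compat. nra.
  - field. nra.
Qed.

Lemma dioph N : forall n q x p, (1 <= q <= n)%nat -> K N x ->
  INR q * Rabs (INR q * x - IZR p) >= cN N * (1 + / INR q).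
Proof.
  induction n as [|n IH]; intros q x p Hq HK; [lia|].
  destruct (cN_spec N) as [Hc Hc1]. set (c := cN N) in *.
  destruct (K_bounds N x HK) as [HN [Hx1 Hx2]].
  assert (HNr : 1 <= INR N) by (apply (le_INR 1); lia).
  assert (Hqr : 1 <= INR q) by (apply (le_INR 1); lia).
  assert (Hx1' : x * (INR N + 1) >= 1).
  { apply Rmult_le_compat_r with (r := INR N + 1) in Hx1; [|lra]. rewrite Rinv_l in Hx1; lra. }
  set (D := Rabs (INR q * x - IZR p)).
  assert (HD0 : 0 <= D) by apply Rabs_pos.
  assert (Hiq : / INR q <= 1). { rewrite <- Rinv_1. apply Rinv_le_contravar; lra. }
  destruct (Rlt_or_le (INR q * D) (2 * c)) as [Hsmall|Hbig].
  2:{ nra. }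

  destruct (Z_le_gt_dec_ p 0) as [Hp0|Hp0].
  { exfalso. assert (IZR p <= 0) by (apply IZR_le; lia).
    assert (D >= INR q * x - IZR p) by (apply Rle_ge, Rle_abs).
    assert (D >= x) by nra.
    assert (INR q * D >= x) by nra.
    assert (2 * c * (INR N + 1) <= 1) by nra.
    assert (2 * c <= x) by nra. lra. }
  destruct (Z_le_gt_dec_ (Z.of_nat q) p) as [Hpq|Hpq].
  { exfalso. assert (INR q <= IZR p) by (rewrite INR_IZR_INZ; apply IZR_le; lia).
    assert (D >= IZR p - INR q * x).
    { unfold D. rewrite <- Rabs_Ropp. apply Rle_ge. replace (IZR p - INR q * x) with (- (INR q * x - IZR p)) by ring. apply Rle_abs. }
    assert (D >= INR q * (1 - x)) by nra.
    assert (0 <= 1 - x) by nra.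
    assert (INR q * D >= 1 - x) by nra.
    assert (2 * c * (INR N + 2) <= 1) by nra.
    assert (2 * c <= 1 - x) by nra. lra. }
  destruct (K_decomp N x HK) as [A [y [HA [Hy Hxy]]]].
  set (pn := Z.to_nat p).
  assert (Hpn : IZR p = INR pn) by (unfold pn; rewrite INR_IZR_INZ, Z2Nat.id; [reflexivity|lia]).
  set (q' := (Z.of_nat q - p * Z.of_nat A)%Z).
  assert (Hq' : IZR q' = INR q - IZR p * INR A).
  { unfold q'. rewrite minus_IZR, mult_IZR, <- !INR_IZR_INZ. reflexivity. }
  pose proof (K_weak N y Hy) as [Hy1 Hy2].
  assert (HAr : 1 <= INR A) by (apply (le_INR 1); lia).
  assert (Hinv0 : 0 < / (INR N + 1)) by (apply Rinv_0_lt_compat; lra).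
  assert (HAy : x * (INR A + y) = 1) by (rewrite Hxy; field; lra).
  set (E := Rabs (INR pn * y - IZR q')).
  assert (HE0 : 0 <= E) by apply Rabs_pos.
  assert (HDE : D = x * E).
  { unfold D, E. 
    replace (INR q * x - IZR p) with (x * (- (INR pn * y - IZR q'))).
    - rewrite Rabs_mult, Rabs_Ropp, Rabs_pos_eq; [reflexivity| lra].
    - rewrite Hq', <- Hpn. 
      transitivity (x * (INR q - IZR p * (INR A + y))); [ring|].
      replace (IZR p) with (IZR p * (x * (INR A + y))) at 2 by (rewrite HAy; ring).
      ring. }
  assert (Hqx : INR q * x >= IZR p - D).
  { assert (D >= IZR p - INR q * x).
    { unfold D. rewrite <- Rabs_Ropp. apply Rle_ge. replace (IZR p - INR q * x) with (- (INR q * x - IZR p)) by ring. apply Rle_abs. }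
    lra. }
  assert (HIH : INR pn * E >= c * (1 + / INR pn)).
  { apply IH; auto. unfold pn. lia. }
  rewrite Hpn in Hqx.
  assert (Hp1 : 1 <= INR pn) by (apply (le_INR 1); unfold pn; lia).
  apply (step (INR N) c x (INR pn) (INR q) D E); auto.
Qed.

Lemma pigeon (f : nat -> nat) n M :
  (forall i, (i < n)%nat -> (f i < M)%nat) ->
  (forall i j, (i < n)%nat -> (j < n)%nat -> f i = f j -> i = j) -> (n <= M)%nat.
Proof.
  intros H1 H2.
  rewrite <- (length_seq n 0), <- (length_map f), <- (length_seq M 0).
  apply NoDup_incl_length.
  - apply NoDup_map_NoDup_ForallPairs; [|apply seq_NoDup].
    intros i j Hi Hj. apply in_seq in Hi, Hj. apply H2; lia.
  - intros z Hz. apply in_map_iff in Hz. destruct Hz as [i [<- Hi]].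
    apply in_seq in Hi. apply in_seq. specialize (H1 i). lia.
Qed.

Lemma fracR_bounds r : 0 <= fracR r < 1.
Proof. unfold fracR. pose proof (base_Int_part r). lra. Qed.

Lemma int_lt_1 (k : Z) : 0 < IZR k < 1 -> False.
Proof. intros [H1 H2]. apply lt_IZR in H1, H2. lia. Qed.

Lemma in_sector_char S phi : 0 <= sec_angle S < 1 ->
  (in_sector S phi <-> exists k : Z, 0 <= phi - sec_start S - IZR k <= sec_angle S).
Proof.
  intros Hw. unfold in_sector, fracR. split.
  - intros H. exists (Int_part (phi - sec_start S)). pose proof (base_Int_part (phi - sec_start S)). lra.
  - intros [k Hk]. rewrite <- (Int_part_spec (phi - sec_start S) k); lra.
Qed.

Lemma in_sector_int_char S phi : sec_angle S < 1 ->
  (exists k : Z, 0 < phi - sec_start S - IZR k < sec_angle S) -> in_sector_int S phi.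
Proof.
  intros Hw [k Hk]. unfold in_sector_int, fracR.
  rewrite <- (Int_part_spec (phi - sec_start S) k); lra.
Qed.

Section Dyn.
Variables (theta alpha beta : R).
Hypothesis (Ha : 0 < alpha) (Hb : 0 < beta) (Hab : alpha + beta < 1).

Lemma inX phi : in_sector (Xsec alpha beta) phi -> exists k : Z, - alpha <= phi - IZR k <= beta.
Proof.
  intros H. apply in_sector_char in H; [|simpl; lra]. destruct H as [k Hk]. exists k.
  simpl in Hk. lra.
Qed.

Lemma F1 a : first_return theta (Xsec alpha beta) (Xminus alpha) a ->
  exists m : Z, 0 <= INR a * theta - IZR m <= beta.
Proof.
  intros [_ H].
  assert (Hm : forall u, 0 <= u <= alpha -> exists k : Z, - alpha <= - alpha + u + INR a * theta - IZR k <= beta).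
  { intros u Hu. destruct (H (- alpha + u)) as [H1 _].
    - apply in_sector_char; [simpl; lra|]. exists 0%Z. simpl. lra.
    - apply inX in H1. exact H1. }
  destruct (Hm alpha) as [k Hk]; [lra|].
  destruct (Rle_or_lt 0 (INR a * theta - IZR k)) as [Hpos|Hneg].
  { exists k. lra. }
  exfalso. pose (d := - (INR a * theta - IZR k)). assert (Hd : d = - (INR a * theta - IZR k)) by reflexivity. clearbody d.
  destruct (Hm 0) as [j Hj]; [lra|].
  assert (HJ : IZR (k - j) = 1).
  { assert (0 < IZR (k - j) < 2) by (rewrite minus_IZR; lra).
    destruct H0 as [H1 H2]. apply lt_IZR in H1, H2. f_equal. lia. }
  rewrite minus_IZR in HJ.
  set (g := (1 - alpha - beta) / 2).
  destruct (Hm (d - g)) as [j' Hj']; [unfold g; lra|].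
  apply (int_lt_1 (k - j')). rewrite minus_IZR. unfold g in *. lra.
Qed.

Lemma F1' b : first_return theta (Xsec alpha beta) (Xplus beta) b ->
  exists m : Z, - alpha <= INR b * theta - IZR m <= 0.
Proof.
  intros [_ H].
  assert (Hm : forall u, 0 <= u <= beta -> exists k : Z, - alpha <= u + INR b * theta - IZR k <= beta).
  { intros u Hu. destruct (H u) as [H1 _].
    - apply in_sector_char; [simpl; lra|]. exists 0%Z. simpl. lra.
    - apply inX in H1. exact H1. }
  destruct (Hm 0) as [k Hk]; [lra|].
  destruct (Rle_or_lt (INR b * theta - IZR k) 0) as [Hneg|Hpos].
  { exists k. lra. }
  exfalso. pose (d := INR b * theta - IZR k). assert (Hd : d = INR b * theta - IZR k) by reflexivity. clearbody d.
  destruct (Hm beta) as [j Hj]; [lra|].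
  assert (HJ : IZR (j - k) = 1).
  { assert (0 < IZR (j - k) < 2) by (rewrite minus_IZR; lra).
    destruct H0 as [H1 H2]. apply lt_IZR in H1, H2. f_equal. lia. }
  rewrite minus_IZR in HJ.
  set (g := (1 - alpha - beta) / 2).
  destruct (Hm (beta - d + g)) as [j' Hj']; [unfold g; lra|].
  apply (int_lt_1 (j' - k)). rewrite minus_IZR. unfold g in *. lra.
Qed.

Lemma F2 a : first_return theta (Xsec alpha beta) (Xminus alpha) a ->
  forall i, (0 < i < a)%nat -> forall m : Z, alpha <= Rabs (INR i * theta - IZR m).
Proof.
  intros [_ H] i Hi m.
  destruct (Rle_or_lt alpha (Rabs (INR i * theta - IZR m))) as [Hl|Hl]; auto.
  exfalso. pose (r := INR i * theta - IZR m). assert (Hrr : r = INR i * theta - IZR m) by reflexivity. fold r in Hl. clearbody r.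
  assert (Hr : - alpha < r < alpha) by (apply Rabs_def2 in Hl; lra).
  set (u := if Rle_dec 0 r then alpha - r else alpha).
  assert (Hu : 0 <= u <= alpha) by (unfold u; destruct (Rle_dec 0 r); lra).
  destruct (H (- alpha + u)) as [_ H2].
  { apply in_sector_char; [simpl; lra|]. exists 0%Z. simpl. lra. }
  apply (H2 i Hi). apply in_sector_int_char; [simpl; lra|].
  exists m. simpl. unfold u in *. destruct (Rle_dec 0 r); lra.
Qed.

Lemma F2' b : first_return theta (Xsec alpha beta) (Xplus beta) b ->
  forall i, (0 < i < b)%nat -> forall m : Z, beta <= Rabs (INR i * theta - IZR m).
Proof.
  intros [_ H] i Hi m.
  destruct (Rle_or_lt beta (Rabs (INR i * theta - IZR m))) as [Hl|Hl]; auto.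
  exfalso. pose (r := INR i * theta - IZR m). assert (Hrr : r = INR i * theta - IZR m) by reflexivity. fold r in Hl. clearbody r.
  assert (Hr : - beta < r < beta) by (apply Rabs_def2 in Hl; lra).
  set (u := if Rle_dec 0 r then 0 else - r).
  assert (Hu : 0 <= u <= beta) by (unfold u; destruct (Rle_dec 0 r); lra).
  destruct (H u) as [_ H2].
  { apply in_sector_char; [simpl; lra|]. exists 0%Z. simpl. lra. }
  apply (H2 i Hi). apply in_sector_int_char; [simpl; lra|].
  exists m. simpl. unfold u in *. destruct (Rle_dec 0 r); lra.
Qed.

End Dyn.

Lemma pack (theta g : R) (a : nat) : 0 < g ->
  (forall i, (0 < i < a)%nat -> forall m : Z, g <= Rabs (INR i * theta - IZR m)) ->
  g * (INR a - 1) <= 1.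
Proof.
  intros Hg H.
  set (box := fun i : nat => Z.to_nat (Int_part (fracR (INR i * theta) / g))).
  set (M := (Z.to_nat (Int_part (1 / g)) + 1)%nat).
  assert (Hbox : forall i, 0 <= IZR (Int_part (fracR (INR i * theta) / g)) <= fracR (INR i * theta) / g
                   /\ fracR (INR i * theta) / g < IZR (Int_part (fracR (INR i * theta) / g)) + 1).
  { intros i. pose proof (base_Int_part (fracR (INR i * theta) / g)) as [B1 B2].
    pose proof (fracR_bounds (INR i * theta)).
    assert (0 <= fracR (INR i * theta) / g) by (unfold Rdiv; apply Rmult_le_pos; [lra|]; apply Rlt_le, Rinv_0_lt_compat; lra).
    split; [split|]; try lra.
    assert (-1 < IZR (Int_part (fracR (INR i * theta) / g))) by lra.
    assert (-1 < Int_part (fracR (INR i * theta) / g))%Z by (apply lt_IZR; auto).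
    apply IZR_le. lia. }
  assert (HaM : (a <= M)%nat).
  { apply (pigeon box).
    - intros i Hi. unfold box, M.
      destruct (Hbox i) as [[B0 B1] B2].
      pose proof (fracR_bounds (INR i * theta)).
      assert (fracR (INR i * theta) / g <= 1 / g).
      { unfold Rdiv. apply Rmult_le_compat_r; [apply Rlt_le, Rinv_0_lt_compat; lra| lra]. }
      pose proof (base_Int_part (1/g)) as [C1 C2].
      assert (IZR (Int_part (fracR (INR i * theta) / g)) < IZR (Int_part (1 / g)) + 1) by lra.
      rewrite <- plus_IZR in H2. apply lt_IZR in H2.
      apply le_IZR in B0. lia.
    - intros i j Hi Hj Hij.
      destruct (Nat.lt_trichotomy i j) as [Hlt|[Heq|Hlt]]; auto; exfalso.
      + destruct (Hbox i) as [[Bi0 Bi1] Bi2]. destruct (Hbox j) as [[Bj0 Bj1] Bj2].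
        unfold box in Hij. apply le_IZR in Bi0, Bj0. apply Z2Nat.inj in Hij; try lia.
        rewrite Hij in Bi1, Bi2.
        assert (Hd : Rabs (fracR (INR i * theta) / g - fracR (INR j * theta) / g) < 1) by (apply Rabs_def1; lra).
        replace (fracR (INR i * theta) / g - fracR (INR j * theta) / g) with ((fracR (INR i * theta) - fracR (INR j * theta)) / g) in Hd by (field; lra).
        unfold Rdiv in Hd. rewrite Rabs_mult, Rabs_inv, (Rabs_pos_eq g) in Hd by lra.
        assert (Hd' : Rabs (fracR (INR i * theta) - fracR (INR j * theta)) < g).
        { apply (Rmult_lt_reg_r (/ g)); [apply Rinv_0_lt_compat; lra|]. rewrite Rinv_r; lra. }
        specialize (H (j - i)%nat ltac:(lia) (Int_part (INR j * theta) - Int_part (INR i * theta))%Z).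
        rewrite minus_INR, minus_IZR in H by lia.
        rewrite <- Rabs_Ropp in Hd'. unfold fracR in Hd'.
        replace (- (INR i * theta - IZR (Int_part (INR i * theta)) - (INR j * theta - IZR (Int_part (INR j * theta)))))
          with ((INR j - INR i) * theta - (IZR (Int_part (INR j * theta)) - IZR (Int_part (INR i * theta)))) in Hd' by ring.
        lra.
      + destruct (Hbox i) as [[Bi0 Bi1] Bi2]. destruct (Hbox j) as [[Bj0 Bj1] Bj2].
        unfold box in Hij. apply le_IZR in Bi0, Bj0. apply Z2Nat.inj in Hij; try lia.
        rewrite Hij in Bi1, Bi2.
        assert (Hd : Rabs (fracR (INR i * theta) / g - fracR (INR j * theta) / g) < 1) by (apply Rabs_def1; lra).
        replace (fracR (INR i * theta) / g - fracR (INR j * theta) / g) with ((fracR (INR i * theta) - fracR (INR j * theta)) / g) in Hd by (field; lra).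
        unfold Rdiv in Hd. rewrite Rabs_mult, Rabs_inv, (Rabs_pos_eq g) in Hd by lra.
        assert (Hd' : Rabs (fracR (INR i * theta) - fracR (INR j * theta)) < g).
        { apply (Rmult_lt_reg_r (/ g)); [apply Rinv_0_lt_compat; lra|]. rewrite Rinv_r; lra. }
        specialize (H (i - j)%nat ltac:(lia) (Int_part (INR i * theta) - Int_part (INR j * theta))%Z).
        rewrite minus_INR, minus_IZR in H by lia.
        unfold fracR in Hd'.
        replace (INR i * theta - IZR (Int_part (INR i * theta)) - (INR j * theta - IZR (Int_part (INR j * theta))))
          with ((INR i - INR j) * theta - (IZR (Int_part (INR i * theta)) - IZR (Int_part (INR j * theta)))) in Hd' by ring.
        lra. }
  apply le_INR in HaM. unfold M in HaM. rewrite plus_INR, (INR_IZR_INZ (Z.to_nat _)), Z2Nat.id in HaM.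
  - pose proof (base_Int_part (1/g)) as [C1 C2]. simpl in HaM.
    assert (INR a - 1 <= 1 / g) by lra.
    apply (Rmult_le_compat_l g) in H0; [|lra]. replace (g * (1/g)) with 1 in H0 by (field; lra). lra.
  - pose proof (base_Int_part (1/g)) as [C1 C2].
    assert (0 < 1 / g) by (unfold Rdiv; rewrite Rmult_1_l; apply Rinv_0_lt_compat; lra).
    assert (-1 < Int_part (1/g))%Z by (apply lt_IZR; lra). lia.
Qed.

Lemma dioph_theta N theta : in_Theta N theta ->
  forall q : nat, (1 <= q)%nat -> forall m : Z, INR q * Rabs (INR q * theta - IZR m) >= cN N.
Proof.
  intros [a [x [Ha [Hcv [k Hk]]]]] q Hq m.
  assert (HK : K N x) by (exists a; auto).
  destruct (cN_spec N) as [Hc _].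
  assert (Hqr : 1 <= INR q) by (apply (le_INR 1); lia).
  assert (Hiq : 0 < / INR q) by (apply Rinv_0_lt_compat; lra).
  destruct Hk as [Hk|Hk]; subst theta.
  - pose proof (dioph N q q x (m - Z.of_nat q * k)%Z ltac:(lia) HK) as H.
    rewrite minus_IZR, mult_IZR, <- INR_IZR_INZ in H.
    replace (INR q * (x + IZR k) - IZR m) with (INR q * x - (IZR m - INR q * IZR k)) by ring.
    nra.
  - pose proof (dioph N q q x (Z.of_nat q + Z.of_nat q * k - m)%Z ltac:(lia) HK) as H.
    rewrite minus_IZR, plus_IZR, mult_IZR, <- INR_IZR_INZ in H.
    replace (INR q * (1 - x + IZR k) - IZR m) with (- (INR q * x - (INR q + INR q * IZR k - IZR m))) by ring.
    rewrite Rabs_Ropp. nra.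
Qed.

Lemma bound_ab N theta alpha beta a b : in_Theta N theta ->
  0 < alpha -> 0 < beta -> alpha + beta < 1 ->
  first_return theta (Xsec alpha beta) (Xminus alpha) a ->
  first_return theta (Xsec alpha beta) (Xplus beta) b ->
  alpha * cN N <= 2 * beta.
Proof.
  intros HT Ha Hb Hab Hfa Hfb.
  destruct (F1 theta alpha beta Ha Hb Hab a Hfa) as [m Hm].
  pose proof (pack theta alpha a Ha (F2 theta alpha beta Ha Hb Hab a Hfa)) as Hp.
  destruct Hfa as [Ha1 _].
  pose proof (dioph_theta N theta HT a Ha1 m) as Hd.
  rewrite Rabs_pos_eq in Hd by lra.
  assert (1 <= INR a) by (apply (le_INR 1); lia).
  assert (INR a * beta >= cN N) by nra.
  destruct (cN_spec N) as [Hc _].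
  assert (alpha * INR a <= 2) by nra.
  nra.
Qed.

Lemma bound_ba N theta alpha beta a b : in_Theta N theta ->
  0 < alpha -> 0 < beta -> alpha + beta < 1 ->
  first_return theta (Xsec alpha beta) (Xminus alpha) a ->
  first_return theta (Xsec alpha beta) (Xplus beta) b ->
  beta * cN N <= 2 * alpha.
Proof.
  intros HT Ha Hb Hab Hfa Hfb.
  destruct (F1' theta alpha beta Ha Hb Hab b Hfb) as [m Hm].
  pose proof (pack theta beta b Hb (F2' theta alpha beta Ha Hb Hab b Hfb)) as Hp.
  destruct Hfb as [Hb1 _].
  pose proof (dioph_theta N theta HT b Hb1 m) as Hd.
  rewrite <- Rabs_Ropp, Rabs_pos_eq in Hd by lra.
  assert (1 <= INR b) by (apply (le_INR 1); lia).
  assert (INR b * alpha >= cN N) by nra.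
  destruct (cN_spec N) as [Hc _].
  assert (beta * INR b <= 2) by nra.
  nra.
Qed.

Lemma angle_in theta alpha beta a b S :
  In S (renorm_triangulation theta alpha beta a b) -> sec_angle S = alpha \/ sec_angle S = beta.
Proof.
  unfold renorm_triangulation. intros H. apply in_app_or in H.
  destruct H as [H|H]; apply in_map_iff in H; destruct H as [i [<- _]]; simpl; auto.
Qed.

Lemma ratio s1 s2 t : 0 < s1 -> 0 < s2 -> 0 < t -> s1 <= t * s2 -> s2 <= t * s1 -> / t <= s1 / s2 <= t.
Proof.
  intros H1 H2 Ht H3 H4. split.
  - apply (Rmult_le_reg_r (t * s2)); [nra|].
    replace (/ t * (t * s2)) with s2 by (field; lra).
    replace (s1 / s2 * (t * s2)) with (t * s1) by (field; lra). lra.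
  - apply (Rmult_le_reg_r s2); [lra|]. replace (s1 / s2 * s2) with s1 by (field; lra). lra.
Qed.

Theorem lemmaA3 :
  forall N : nat, exists t : R, 1 < t /\
    forall (theta alpha beta : R) (a b : nat),
      in_Theta N theta ->
      sector_renormalization theta alpha beta a b ->
      forall S1 S2 : sector,
        In S1 (renorm_triangulation theta alpha beta a b) ->
        In S2 (renorm_triangulation theta alpha beta a b) ->
        0 < sec_angle S1 -> 0 < sec_angle S2 ->
        / t <= sec_angle S1 / sec_angle S2 <= t.
Proof.
  intros N. destruct (cN_spec N) as [Hc Hc1].
  assert (Hc2 : cN N < 1). { pose proof (pos_INR N). nra. }
  exists (2 / cN N). split.
  { apply (Rmult_lt_reg_r (cN N)); auto. replace (2 / cN N * cN N) with 2 by (field; lra). lra. }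
  intros theta alpha beta a b HT [Ha0 [Hb0 [Hab [Hfa Hfb]]]] S1 S2 H1 H2 P1 P2.
  assert (Ht : 0 < 2 / cN N) by (unfold Rdiv; apply Rmult_lt_0_compat; [lra|apply Rinv_0_lt_compat; lra]).
  assert (Ht1 : 1 <= 2 / cN N).
  { apply (Rmult_le_reg_r (cN N)); auto. replace (2 / cN N * cN N) with 2 by (field; lra). lra. }
  assert (Hab' : 0 < alpha -> 0 < beta -> alpha <= 2 / cN N * beta /\ beta <= 2 / cN N * alpha).
  { intros Ha Hb. split.
    - apply (Rmult_le_reg_r (cN N)); auto. replace (2 / cN N * beta * cN N) with (2 * beta) by (field; lra).
      eapply bound_ab; eauto; lra.
    - apply (Rmult_le_reg_r (cN N)); auto. replace (2 / cN N * alpha * cN N) with (2 * alpha) by (field; lra).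
      eapply bound_ba; eauto; lra. }
  apply ratio; auto.
  - destruct (angle_in _ _ _ _ _ _ H1) as [E1|E1]; destruct (angle_in _ _ _ _ _ _ H2) as [E2|E2];
      rewrite E1, E2 in *; try nra; apply Hab'; auto.
  - destruct (angle_in _ _ _ _ _ _ H1) as [E1|E1]; destruct (angle_in _ _ _ _ _ _ H2) as [E2|E2];
      rewrite E1, E2 in *; try nra; apply Hab'; auto.
Qed.
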